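(* Consider Algorithm iR2N (described in the context) and suppose (A4) and (A6) hold. For each iteration $k$ with nonzero denominator, let $$\rho_k=\frac{f(x_k)+h(x_k)-f(x_k+s_k)-h(x_k+s_k)}{\varphi(0;x_k)+\psi(0;x_k)-\varphi(s_k;x_k)-\psi(s_k;x_k)},$$ and define $$\eta_1=\hat\eta_1-\frac{4\kappa_f\theta_1\theta_2^2}{(1-\theta_1)\sigma_{\min}},\qquad \eta_2=\hat\eta_2-\frac{4\kappa_f\theta_1\theta_2^2}{(1-\theta_1)\sigma_{\min}}.$$ Then $\eta_1>0$, $\eta_2>0$, and for every $k$: $\hat\rho_k\ge\hat\eta_1\Rightarrow\rho_k\ge\eta_1$, and $\hat\rho_k\ge\hat\eta_2\Rightarrow\rho_k\ge\eta_2$.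
   Context: Setting. $f:\mathbb{R}^n\to\mathbb{R}$ is continuously differentiable, $h:\mathbb{R}^n\to\mathbb{R}\cup\{+\infty\}$ is proper and lower semicontinuous; the problem is $\min_x f(x)+h(x)$. $\|\cdot\|$ is the Euclidean norm (spectral norm for matrices). For each $x$, approximations $\hat f(x)\in\mathbb{R}$ of $f(x)$ and $\hat\nabla f(x)\in\mathbb{R}^n$ of $\nabla f(x)$ are available. For each $x$, $\psi(\cdot;x):\mathbb{R}^n\to\mathbb{R}\cup\{+\infty\}$ is proper, lsc, satisfies $\psi(0;x)=h(x)$ and $\partial\psi(0;x)\subseteq\partial h(x)$ ($\partial$ = limiting subdifferential), and is uniformly prox-bounded: there is $\lambda>0$ such that for every $x$ and every $0<\lambda'<\lambda$, $w\mapsto\psi(w;x)+\tfrac{1}{2\lambda'}\|w\|^2$ is bounded below. Models: $\varphi_{\mathrm{cp}}(s;x)=\hat f(x)+\hat\nabla f(x)^Ts$; $m_{\mathrm{cp}}(s;x,\nu^{-1})=\varphi_{\mathrm{cp}}(s;x)+\tfrac12\nu^{-1}\|s\|^2+\psi(s;x)$; for a symmetric $B(x)\in\mathbb{R}^{n\times n}$, $\varphi(s;x)=\hat f(x)+\hat\nabla f(x)^Ts+\tfrac12 s^TB(x)s$ and $m(s;x,\sigma)=\varphi(s;x)+\tfrac12\sigma\|s\|^2+\psi(s;x)$. Algorithm iR2N. Constants: $\kappa_f,\kappa_\nabla>0$, $0<\gamma_3\le 1<\gamma_1\le\gamma_2$, $0<\hat\eta_1\le\hat\eta_2<1$, $0<\theta_1<1<\theta_2$,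 $\sigma_{\min}>4\kappa_f\theta_1\theta_2^2/(\hat\eta_1(1-\theta_1))$, $\sigma_0\ge\sigma_{\min}$, $x_0\in\mathbb{R}^n$. At iteration $k=0,1,\dots$: choose symmetric $B_k=B(x_k)$; set $\nu_k=\theta_1/(\|B_k\|+\sigma_k)$; compute $\hat s_{k,\mathrm{cp}}$ with $m_{\mathrm{cp}}(\hat s_{k,\mathrm{cp}};x_k,\nu_k^{-1})\le m_{\mathrm{cp}}(0;x_k,\nu_k^{-1})$ (an approximate minimizer of $m_{\mathrm{cp}}(\cdot;x_k,\nu_k^{-1})$ obtained by a descent procedure from $s=0$) and set $\hat\xi_{k,\mathrm{cp}}=(\varphi_{\mathrm{cp}}+\psi)(0;x_k)-(\varphi_{\mathrm{cp}}+\psi)(\hat s_{k,\mathrm{cp}};x_k)$; compute $s_k$ with $m(s_k;x_k,\sigma_k)\le m(\hat s_{k,\mathrm{cp}};x_k,\sigma_k)$; if $\|s_k\|>\theta_2\|\hat s_{k,\mathrm{cp}}\|$, reset $s_k=\hat s_{k,\mathrm{cp}}$ (these computations are repeated with refined $\hat f,\hat\nabla f$ until (A6) holds). Compute $$\hat\rho_k=\frac{\hat f(x_k)+h(x_k)-\hat f(x_k+s_k)-h(x_k+s_k)}{\varphi(0;x_k)+\psi(0;x_k)-\varphi(s_k;x_k)-\psi(s_k;x_k)},$$ where $\varphi(\cdot;x_k)$ uses $B_k$. If $\hat\rho_k\ge\hat\eta_1$ (successful) set $x_{k+1}=x_k+s_k$, else $x_{k+1}=x_k$. Choose $\sigma_{k+1}\in[\gamma_3\sigma_k,\sigma_k]$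 if $\hat\rho_k\ge\hat\eta_2$ (very successful), $\sigma_{k+1}\in[\sigma_k,\gamma_1\sigma_k]$ if $\hat\eta_1\le\hat\rho_k<\hat\eta_2$, $\sigma_{k+1}\in[\gamma_1\sigma_k,\gamma_2\sigma_k]$ if $\hat\rho_k<\hat\eta_1$; then reset $\sigma_{k+1}=\max(\sigma_{k+1},\sigma_{\min})$. Assumptions. (A4) For all $k$, $\varphi(0;x_k)+\psi(0;x_k)-(\varphi(s_k;x_k)+\psi(s_k;x_k))\ge(1-\theta_1)\hat\xi_{k,\mathrm{cp}}$. (A6) For all $k$: $|f(x_k)-\hat f(x_k)|\le\kappa_f\|s_k\|^2$, $|f(x_k+s_k)-\hat f(x_k+s_k)|\le\kappa_f\|s_k\|^2$, $\|\nabla f(x_k)-\hat\nabla f(x_k)\|\le\kappa_\nabla\|s_k\|$. *)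

(* Defs.v *)
From HB Require Import structures.
From mathcomp Require Import all_boot all_order all_algebra.
From mathcomp Require Import all_classical all_reals all_analysis.
Set Implicit Arguments. Unset Strict Implicit. Unset Printing Implicit Defensive.
Import Order.TTheory GRing.Theory Num.Theory.
Import numFieldNormedType.Exports.
Local Open Scope classical_set_scope.
Local Open Scope ring_scope.

Section Defs.
Variables (R : realType) (n : nat).
Local Notation vec := 'cV[R]_n.

Definition dot (u v : vec) : R := \sum_(i < n) u i ord0 * v i ord0.
Definition enorm (u : vec) : R := Num.sqrt (dot u u).

Definition opnorm (B : 'M[R]_n) : R :=
  sup [set r | exists u : vec, enorm u <= 1 /\ r = enorm (B *m u)].

Definition symmetric_mx (B : 'M[R]_n) : Prop := B^T = B.

Definition C1_with_grad (f : vec -> R) (g : vec -> vec) : Prop :=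
  (forall x, differentiable f x) /\
  (forall x v, 'd f x v = dot (g x) v) /\ continuous g.

Definition proper_fun (h : vec -> \bar R) : Prop :=
  (forall x, h x != -oo%E) /\ (exists x, h x != +oo%E).

Definition lsc_fun (h : vec -> \bar R) : Prop :=
  forall x (a : R), (a%:E < h x)%E -> \forall y \near x, (a%:E < h y)%E.

Definition frechet_subdiff (h : vec -> \bar R) (x : vec) : set vec :=
  [set v | (exists r : R, h x = r%:E) /\
     forall eps : R, 0 < eps -> exists2 del : R, 0 < del &
       forall y, enorm (y - x) < del ->
         (h x + (dot v (y - x) - eps * enorm (y - x))%:E <= h y)%E].

Definition limiting_subdiff (h : vec -> \bar R) (x : vec) : set vec :=
  [set v | exists (xs vs : nat -> vec),
     xs @ \oo --> x /\ (h \o xs) @ \oo --> h x /\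
     (forall k, frechet_subdiff h (xs k) (vs k)) /\ vs @ \oo --> v].

(* uniform prox-boundedness of the family psi(. ; x) (psi x w = psi(w;x)) *)
Definition unif_prox_bounded (psi : vec -> vec -> \bar R) : Prop :=
  exists2 lam : R, 0 < lam & forall x (lam' : R), 0 < lam' < lam ->
    exists c : R, forall w,
      (c%:E <= psi x w + ((2 * lam')^-1 * enorm w ^+ 2)%:E)%E.

(* Models (fh = \hat f(x), gh = \hat\nabla f(x)). *)
Definition phi_cp (fh : R) (gh : vec) (s : vec) : R := fh + dot gh s.
Definition phi_q (fh : R) (gh : vec) (B : 'M[R]_n) (s : vec) : R :=
  fh + dot gh s + 2^-1 * dot s (B *m s).
Definition m_cp (fh : R) (gh : vec) (psix : vec -> \bar R) (nuinv : R)
  (s : vec) : \bar R :=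
  ((phi_cp fh gh s + 2^-1 * nuinv * enorm s ^+ 2)%:E + psix s)%E.
Definition m_q (fh : R) (gh : vec) (B : 'M[R]_n) (psix : vec -> \bar R)
  (sigma : R) (s : vec) : \bar R :=
  ((phi_q fh gh B s + 2^-1 * sigma * enorm s ^+ 2)%:E + psix s)%E.

End Defs.

(* Main.v *)
Require Import Defs.
From HB Require Import structures.
From mathcomp Require Import all_boot all_order all_algebra.
From mathcomp Require Import all_classical all_reals all_analysis.
From mathcomp Require Import ring lra.
Import Order.TTheory GRing.Theory Num.Theory.
Import numFieldNormedType.Exports.
Local Open Scope classical_set_scope.
Local Open Scope ring_scope.

Lemma enorm0 (R : realType) n : enorm (0 : 'cV[R]_n) = 0.
Proof. by rewrite /enorm /dot big1 ?sqrtr0 // => i _; rewrite mxE mul0r. Qed.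

Lemma enorm_ge0 (R : realType) n (u : 'cV[R]_n) : 0 <= enorm u.
Proof. exact: sqrtr_ge0. Qed.

Lemma opnorm_ge0 (R : realType) n (B : 'M[R]_n) : 0 <= opnorm B.
Proof.
rewrite /opnorm; set E := [set _ | _].
have E0 : E 0 by exists 0; rewrite enorm0 mulmx0 enorm0.
have [ub|nub] := pselect (has_ubound E).
  exact: ub_le_sup ub _ E0.
by rewrite sup_out // => -[].
Qed.

Lemma fin2 (R : realType) (a b d : R) (e1 e2 : \bar R) :
  (a%:E + e1 - b%:E - e2 = d%:E)%E -> e1 \is a fin_num /\ e2 \is a fin_num.
Proof. by case: e1 => [?| |]; case: e2 => [?| |]. Qed.

Lemma core_d (R: realType) (t1 t2 kf smin sk opn sc ss X d : R) :
 0 < t1 < 1 -> 1 < t2 -> 0 < kf -> 0 < smin -> smin <= sk -> 0 <= opn ->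
 0 <= ss -> ss <= t2 * sc -> (1 - t1) * X <= d ->
 2^-1 * ((opn + sk) / t1) * sc ^+ 2 <= X -> d != 0 -> 0 < d.
Proof.
move=> /andP[t10 t11] t21 kf0 smin0 sks opn0 ss0 sssc Xd HX d0.
have sc2 : 0 <= sc ^+ 2 by exact: sqr_ge0.
have X0 : 0 <= X.
  apply: le_trans HX; apply: mulr_ge0 => //; apply: mulr_ge0; first by [].
  by apply: divr_ge0; lra.
by rewrite lt_def d0 /=; apply: le_trans Xd; apply: mulr_ge0 => //; lra.
Qed.

Lemma core (R: realType) (t1 t2 kf smin sk opn sc ss X d N del eta : R) :
 0 < t1 < 1 -> 1 < t2 -> 0 < kf -> 0 < smin -> smin <= sk -> 0 <= opn ->
 0 <= ss -> ss <= t2 * sc -> (1 - t1) * X <= d ->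
 2^-1 * ((opn + sk) / t1) * sc ^+ 2 <= X -> d != 0 ->
 `|del| <= 2 * kf * ss ^+ 2 ->
 eta <= N / d -> eta - 4 * kf * t1 * t2 ^+ 2 / ((1 - t1) * smin) <= (N + del) / d.
Proof.
move=> /andP[t10 t11] t21 kf0 smin0 sks opn0 ss0 sssc Xd HX d0 Hdel HN.
have sc2 : 0 <= sc ^+ 2 by exact: sqr_ge0.
have e : 2^-1 * ((opn + sk) / t1) * sc ^+ 2 = ((opn + sk) * sc ^+ 2) / (2 * t1).
  by field; rewrite gt_eqF.
rewrite e ler_pdivrMr ?mulr_gt0 // in HX.
have h2 : smin * sc ^+ 2 <= (opn + sk) * sc ^+ 2 by apply: ler_wpM2r => //; lra.
have h3 : ss ^+ 2 <= t2 ^+ 2 * sc ^+ 2.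
  rewrite -exprMn; nra.
have X0 : 0 <= X.
  have : 0 <= X * (2 * t1) by apply: le_trans HX; apply: mulr_ge0 => //; lra.
  by rewrite pmulr_lge0 //; lra.
have dpos : 0 < d by rewrite lt_def d0 /=; apply: le_trans Xd; apply: mulr_ge0 => //; lra.
have h4 : (1 - t1) * smin * ss ^+ 2 <= 2 * t1 * t2 ^+ 2 * d.
  have a1 : (1 - t1) * smin * ss ^+ 2 <= (1 - t1) * smin * (t2 ^+ 2 * sc ^+ 2).
    by apply: ler_wpM2l => //; apply: mulr_ge0; lra.
  have a2 : (1 - t1) * smin * (t2 ^+ 2 * sc ^+ 2) <= (1 - t1) * t2 ^+ 2 * (2 * t1 * X).
    have -> : (1 - t1) * smin * (t2 ^+ 2 * sc ^+ 2) = (1 - t1) * t2 ^+ 2 * (smin * sc ^+ 2) by ring.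
    apply: ler_wpM2l; first by apply: mulr_ge0; [lra| exact: sqr_ge0].
    by apply: (le_trans h2); rewrite [2 * t1 * X]mulrC.
  have a3 : (1 - t1) * t2 ^+ 2 * (2 * t1 * X) <= 2 * t1 * t2 ^+ 2 * d.
    have -> : (1 - t1) * t2 ^+ 2 * (2 * t1 * X) = 2 * t1 * t2 ^+ 2 * ((1 - t1) * X) by ring.
    by apply: ler_wpM2l => //; apply: mulr_ge0; [lra| exact: sqr_ge0].
  by apply: le_trans a1 (le_trans a2 a3).
set c := 4 * kf * t1 * t2 ^+ 2 / ((1 - t1) * smin).
have hc : `|del| <= c * d.
  rewrite /c mulrAC ler_pdivlMr; last by apply: mulr_gt0; lra.
  apply: le_trans (_ : 2 * kf * ss ^+ 2 * ((1 - t1) * smin) <= _).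
    by apply: ler_wpM2r => //; apply: mulr_ge0; lra.
  have -> : 4 * kf * t1 * t2 ^+ 2 * d = 2 * kf * (2 * t1 * t2 ^+ 2 * d) by ring.
  have -> : 2 * kf * ss ^+ 2 * ((1 - t1) * smin) = 2 * kf * ((1 - t1) * smin * ss ^+ 2) by ring.
  by apply: ler_wpM2l => //; lra.
have hd : - c <= del / d.
  rewrite lerNl -mulNr ler_pdivrMr //.
  by apply: le_trans _ hc; rewrite -normrN ler_norm.
rewrite mulrDl; lra.
Qed.

Lemma pinf_case (R : realType) (a b c d e e' : R) : 0 < d ->
  (e%:E <= ((a%:E + b%:E - c%:E - +oo) * (d^-1)%:E))%E -> (e'%:E <= ((a%:E + b%:E - c%:E - +oo) * (d^-1)%:E))%E.
Proof.
move=> d0; have -> : (a%:E + b%:E - c%:E - +oo = -oo)%E by [].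
by rewrite gt0_mulNye ?lte_fin ?invr_gt0 // leeNy_eq.
Qed.

Lemma ninf_case (R : realType) (a b c d e e' : R) : 0 < d ->
  (e%:E <= ((a%:E + b%:E - c%:E - -oo) * (d^-1)%:E))%E -> (e'%:E <= ((a%:E + b%:E - c%:E - -oo) * (d^-1)%:E))%E.
Proof.
move=> d0 _; have -> : (a%:E + b%:E - c%:E - -oo = +oo)%E by [].
by rewrite gt0_mulye ?lte_fin ?invr_gt0 // leey.
Qed.

Arguments fin2 {R a b d e1 e2}.
Arguments core_d {R t1 t2 kf smin sk opn sc ss X d}.
Arguments core {R t1 t2 kf smin sk opn sc ss X d N del eta}.

Theorem lemma3p4 (R : realType) (n : nat)
  (* problem data *)
  (f : 'cV[R]_n -> R) (gradf : 'cV[R]_n -> 'cV[R]_n)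
  (h : 'cV[R]_n -> \bar R)
  (psi : 'cV[R]_n -> 'cV[R]_n -> \bar R)       (* psi x s = psi(s; x) *)
  (B : 'cV[R]_n -> 'M[R]_n)
  (* approximations \hat f, \hat\nabla f in force at iteration k *)
  (fhat : nat -> 'cV[R]_n -> R) (ghat : nat -> 'cV[R]_n -> 'cV[R]_n)
  (* constants *)
  (kappa_f kappa_g gamma1 gamma2 gamma3 eta1h eta2h theta1 theta2
   sigma_min sigma0 : R) (x0 : 'cV[R]_n)
  (* iterates *)
  (x s scp sraw : nat -> 'cV[R]_n) (sigma : nat -> R) :
  C1_with_grad f gradf ->
  proper_fun h -> lsc_fun h ->
  (forall y, proper_fun (psi y) /\ lsc_fun (psi y) /\ psi y 0 = h y /\
     limiting_subdiff (psi y) 0 `<=` limiting_subdiff h y) ->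
  unif_prox_bounded psi ->
  (forall y, symmetric_mx (B y)) ->
  0 < kappa_f -> 0 < kappa_g ->
  0 < gamma3 <= 1 -> 1 < gamma1 <= gamma2 ->
  0 < eta1h <= eta2h -> eta2h < 1 ->
  0 < theta1 < 1 -> 1 < theta2 ->
  4 * kappa_f * theta1 * theta2 ^+ 2 / (eta1h * (1 - theta1)) < sigma_min ->
  sigma_min <= sigma0 ->
  (* the iteration *)
  x 0 = x0 -> sigma 0 = sigma0 ->
  (forall k,
     let xk := x k in let fh := fhat k xk in let gh := ghat k xk in
     let Bk := B xk in let nuk := theta1 / (opnorm Bk + sigma k) in
     let den := ((phi_q fh gh Bk 0%R)%:E + psi xk 0%R
                  - (phi_q fh gh Bk (s k))%:E - psi xk (s k))%E in
     let numh := ((fhat k xk)%:E + h xk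
                  - (fhat k (xk + s k)%R)%:E - h (xk + s k)%R)%E in
     (m_cp fh gh (psi xk) nuk^-1 (scp k) <= m_cp fh gh (psi xk) nuk^-1 0)%E /\
     (m_q fh gh Bk (psi xk) (sigma k) (sraw k)
        <= m_q fh gh Bk (psi xk) (sigma k) (scp k))%E /\
     s k = (if enorm (sraw k) > theta2 * enorm (scp k) then scp k else sraw k) /\
     (exists tau : R, sigma k.+1 = Num.max tau sigma_min /\
       forall d : R, den = d%:E -> d != 0 ->
         let rhoh := (numh * (d^-1)%:E)%E in
         (x k.+1 = (if (eta1h%:E <= rhoh)%E then xk + s k else xk)) /\
         ((eta2h%:E <= rhoh)%E -> gamma3 * sigma k <= tau <= sigma k) /\
         ((eta1h%:E <= rhoh)%E -> (rhoh < eta2h%:E)%E ->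
             sigma k <= tau <= gamma1 * sigma k) /\
         ((rhoh < eta1h%:E)%E -> gamma1 * sigma k <= tau <= gamma2 * sigma k))) ->
  (* (A4) *)
  (forall k,
     let xk := x k in let fh := fhat k xk in let gh := ghat k xk in
     let Bk := B xk in
     let xicp := ((phi_cp fh gh 0%R)%:E + psi xk 0%R
                  - ((phi_cp fh gh (scp k))%:E + psi xk (scp k)))%E in
     (((1 - theta1)%:E * xicp)
        <= (phi_q fh gh Bk 0%R)%:E + psi xk 0%R
           - ((phi_q fh gh Bk (s k))%:E + psi xk (s k)))%E) ->
  (* (A6) *)
  (forall k,
     `|f (x k) - fhat k (x k)| <= kappa_f * enorm (s k) ^+ 2 /\
     `|f (x k + s k) - fhat k (x k + s k)| <= kappa_f * enorm (s k) ^+ 2 /\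
     enorm (gradf (x k) - ghat k (x k)) <= kappa_g * enorm (s k)) ->
  let c := 4 * kappa_f * theta1 * theta2 ^+ 2 / ((1 - theta1) * sigma_min) in
  let eta1 := eta1h - c in let eta2 := eta2h - c in
  0 < eta1 /\ 0 < eta2 /\
  (forall k (d : R),
     let xk := x k in let fh := fhat k xk in let gh := ghat k xk in
     let Bk := B xk in
     ((phi_q fh gh Bk 0%R)%:E + psi xk 0%R
        - (phi_q fh gh Bk (s k))%:E - psi xk (s k))%E = d%:E -> d != 0 ->
     let rhoh := (((fhat k xk)%:E + h xk - (fhat k (xk + s k)%R)%:E
                   - h (xk + s k)%R) * (d^-1)%:E)%E in
     let rho := (((f xk)%:E + h xk - (f (xk + s k)%R)%:E
                   - h (xk + s k)%R) * (d^-1)%:E)%E in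
     ((eta1h%:E <= rhoh)%E -> (eta1%:E <= rho)%E) /\
     ((eta2h%:E <= rhoh)%E -> (eta2%:E <= rho)%E)).
Proof.
move=> Hf Hh1 Hh2 Hpsi Hprox Hsym kf0 kg0 g3 g1 e1 e2 t1 t2 Hsmin Hs0 Hx0 Hsig0 Hit HA4 HA6 c eta1 eta2.
have /andP[e10 e1h] := e1.
have /andP[t10 t11] := t1.
have smin0 : 0 < sigma_min.
  apply: lt_trans Hsmin; apply: divr_gt0; last by apply: mulr_gt0; lra.
  by rewrite !mulr_gt0 // ?exprn_gt0 //; lra.
have hc : c < eta1h.
  rewrite /c ltr_pdivrMr; last by apply: mulr_gt0; lra.
  rewrite ltr_pdivrMr in Hsmin; last by apply: mulr_gt0; lra.
  by have -> : eta1h * ((1 - theta1) * sigma_min) = sigma_min * (eta1h * (1 - theta1)) by ring.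
have hsig : forall k, sigma_min <= sigma k.
  elim=> [|k _]; first by rewrite Hsig0.
  have [_ [_ [_ [tau [-> _]]]]] := Hit k.
  by rewrite le_max lexx orbT.
split; first by rewrite /eta1; lra.
split; first by rewrite /eta2; lra.
move=> k d xk fh gh Bk Hden d0 rhoh rho.
have [Hcp [_ [Hs _]]] := Hit k.
have HA := HA4 k.
have [Hb1 [Hb2 _]] := HA6 k.
have [_ [_ [Hpx _]]] := Hpsi xk.
have [[Hninf _] _] := Hpsi xk.
cbv zeta in Hcp, HA, Hs.
rewrite -/xk -/fh -/gh in Hcp HA Hs Hb1 Hb2.
rewrite /rhoh /rho -/xk -Hpx; clear rhoh rho.
have [f0 fs] := fin2 Hden.
case Ep0 : (psi xk 0) f0 Hden HA Hcp => [p0| |] // _.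
case Eps : (psi xk (s k)) fs => [ps| |] // _.
have := Hninf (scp k).
case Epc : (psi xk (scp k)) => [pc| |] // _.
2: { move=> _ _; rewrite /m_cp Epc Ep0 addey // -EFinD leye_eq.
     }
move=> Hden HA Hcp.
have Hd : d = phi_q fh gh Bk 0 + p0 - phi_q fh gh Bk (s k) - ps.
  by apply/EFin_inj; rewrite -Hden !EFinB EFinD.
have {}HA : (1 - theta1) * (phi_cp fh gh 0 + p0 - (phi_cp fh gh (scp k) + pc))
   <= phi_q fh gh Bk 0 + p0 - (phi_q fh gh Bk (s k) + ps).
  by rewrite -lee_fin EFinM !EFinB !EFinD.
set nui := (theta1 / (opnorm (B xk) + sigma k))^-1 in Hcp.
have {}Hcp : phi_cp fh gh (scp k) + 2^-1 * nui * enorm (scp k) ^+ 2 + pc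
   <= phi_cp fh gh 0 + 2^-1 * nui * enorm (0 : 'cV[R]_n) ^+ 2 + p0.
  by rewrite -lee_fin !EFinD; move: Hcp; rewrite /m_cp Epc Ep0.
rewrite enorm0 expr0n /= mulr0 addr0 /nui in Hcp.
set opn := opnorm (B xk) in Hcp.
have opn0 : 0 <= opn by exact: opnorm_ge0.
have hsk := hsig k.
rewrite invf_div in Hcp.
set sc := enorm (scp k) in Hcp.
set ss := enorm (s k).
have ss0 : 0 <= ss by exact: enorm_ge0.
have sc0 : 0 <= sc by exact: enorm_ge0.
have sssc : ss <= theta2 * sc.
  rewrite /ss Hs; case: ifP => [_|]; first by rewrite -/sc; nra.
  by move/negbT; rewrite -leNgt.
set X := (phi_cp fh gh 0 + p0 - (phi_cp fh gh (scp k) + pc)).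
have HX : 2^-1 * ((opn + sigma k) / theta1) * sc ^+ 2 <= X by rewrite /X; lra.
have Xd : (1 - theta1) * X <= d by rewrite Hd /X; lra.
have dpos : 0 < d.
  apply: (core_d t1 t2 kf0 smin0 hsk opn0 ss0 sssc Xd HX d0).
have Hdel : `|(f xk - fhat k xk) - (f (xk + s k) - fhat k (xk + s k))| <= 2 * kappa_f * ss ^+ 2.
  apply: le_trans (ler_normB _ _) _; rewrite /ss; lra.
have key := core t1 t2 kf0 smin0 hsk opn0 ss0 sssc Xd HX d0 Hdel.
case Ehs : (h (xk + s k)) => [hs| |].
- have -> : (((f xk)%:E + p0%:E - (f (xk + s k))%:E - hs%:E) * (d^-1)%:E)%E =
     ((f xk + p0 - f (xk + s k) - hs) / d)%:E by rewrite EFinM !EFinB EFinD.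
  have -> : (((fhat k xk)%:E + p0%:E - (fhat k (xk + s k))%:E - hs%:E) * (d^-1)%:E)%E =
     ((fhat k xk + p0 - fhat k (xk + s k) - hs) / d)%:E by rewrite EFinM !EFinB EFinD.
  rewrite !lee_fin.
  have -> : f xk + p0 - f (xk + s k) - hs = (fhat k xk + p0 - fhat k (xk + s k) - hs) +
     ((f xk - fhat k xk) - (f (xk + s k) - fhat k (xk + s k))) by ring.
  by split => /key.
- by split => H; exact: (@pinf_case R _ _ _ d _ _ dpos H).
- by split => H; exact: (@ninf_case R _ _ _ d _ _ dpos H).
Qed.
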